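(* Let $r\ge2$, $\mathcal{X}=\{1,\dots,r\}$, $0<\eta<1$, $0<\epsilon<1$, and put $s=\Big\lfloor \dfrac{\log(1-\epsilon)}{2\log\eta}\Big\rfloor$. Consider the $k$-fold memoryless erasure channel $P_\eta(Y^k|X^k)$. Then: (i) for every $k\ge s$ there is a partition of $\mathcal{X}^k$ into exactly $r^{k-s}$ sets such that any two sequences in the same set differ in at most $s$ coordinates; (ii) consequently, for every $k\ge s$, the number of blocks of an $\epsilon$-reverse compression of $P_\eta(Y^k|X^k)$ satisfies $|\mathcal{P}^{(k)}_\epsilon|\le r^{k-s}$; (iii) the compressibilities $\Gamma^{(k)}_\epsilon$ of $P_\eta(Y^k|X^k)$ satisfy $\liminf_{k\to\infty}\Gamma^{(k)}_\epsilon\ \ge\ 1-r^{-s}$.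
   Context: Erasure channel: $\mathcal{Y}=\{1,\dots,r,\alpha\}$, $P_\eta(y|x)=(1-\eta)\delta_{x,y}+\eta\delta_{\alpha,y}$; its $k$-fold memoryless version is $P_\eta(y^k|x^k)=\prod_{i=1}^kP_\eta(y_i|x_i)$ on input alphabet $\mathcal{X}^k$. Fidelity of distributions: $F[P,Q]=[\sum_x\sqrt{P(x)Q(x)}]^2$. For a channel $P(Y|X)$ with finite input alphabet $\mathcal{X}$ and $\epsilon\in[0,1]$, an $\epsilon$-reverse compression is a partition $\mathcal{P}_\epsilon$ of $\mathcal{X}$ with the minimum possible number of blocks among all partitions such that any two inputs $x,x'$ in the same block satisfy $F[P(Y|x),P(Y|x')]\ge1-\epsilon$. The compressibility is $\Gamma_\epsilon=\frac{|\mathcal{X}|-|\mathcal{P}_\epsilon|}{|\mathcal{X}|-1}$ (for $|\mathcal{X}|\ge2$); $\Gamma^{(k)}_\epsilon$ denotes this quantity for the channel $P_\eta(Y^k|X^k)$ with input alphabet $\mathcal{X}^k$. *)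

(* Defs.v *)
From HB Require Import structures.
From mathcomp Require Import all_boot all_order all_algebra.
From mathcomp Require Import all_classical all_reals all_analysis.
Set Implicit Arguments. Unset Strict Implicit. Unset Printing Implicit Defensive.
Import Order.TTheory GRing.Theory Num.Theory.
Local Open Scope ring_scope.

Definition fidelity {R : realType} {Y : finType} (P Q : Y -> R) : R :=
  (\sum_(y : Y) Num.sqrt (P y * Q y)) ^+ 2.

(* A channel is a map W : X -> Y -> R, W x y = P(y|x).
   A partition of X is admissible at level eps if any two inputs in the same
   block have fidelity >= 1 - eps. *)
Definition admissible_partition {R : realType} {X Y : finType}
    (W : X -> Y -> R) (eps : R) (P : {set {set X}}) : bool :=
  finset.partition P [set: X] &&
  [forall B in P, forall x in B, forall x' in B,
     1 - eps <= fidelity (W x) (W x')].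

(* |P_eps| : minimum number of blocks of an admissible partition
   (the singleton partition is always admissible, so #|X| is a valid default). *)
Definition rev_compression_size {R : realType} {X Y : finType}
    (W : X -> Y -> R) (eps : R) : nat :=
  \big[minn/#|X|]_(P : {set {set X}} | admissible_partition W eps P) #|P|.

Definition compressibility {R : realType} {X Y : finType}
    (W : X -> Y -> R) (eps : R) : R :=
  ((#|X|)%:R - (rev_compression_size W eps)%:R) / ((#|X|)%:R - 1).

(* Erasure channel on X = {1..r} (as 'I_r), output alphabet option 'I_r,
   with None playing the role of the erasure symbol alpha. *)
Definition erasure {R : realType} (r : nat) (eta : R) (x : 'I_r)
    (y : option 'I_r) : R :=
  (1 - eta) * (y == Some x)%:R + eta * (y == None)%:R.

Definition erasure_k {R : realType} (r k : nat) (eta : R)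
    (x : {ffun 'I_k -> 'I_r}) (y : {ffun 'I_k -> option 'I_r}) : R :=
  \prod_(i < k) erasure eta (x i) (y i).

Definition hamming {r k : nat} (x y : {ffun 'I_k -> 'I_r}) : nat :=
  #|[set i : 'I_k | x i != y i]|.

(* Main.v *)
Require Import Defs.
From HB Require Import structures.
From mathcomp Require Import all_boot all_order all_algebra.
From mathcomp Require Import all_classical all_reals all_analysis.
From mathcomp Require Import ring lra.
Import Order.TTheory GRing.Theory Num.Theory.
Local Open Scope ring_scope.

Lemma bigminn_le (I : eqType) (s : seq I) (F : I -> nat) x0 i :
  i \in s -> (\big[minn/x0]_(j <- s) F j <= F i)%N.
Proof.
elim: s => [//|a s IH]; rewrite in_cons big_cons => /orP[/eqP->|/IH h].
  exact: geq_minl.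
exact: leq_trans (geq_minr _ _) h.
Qed.

Lemma bigminn_le_cond (I : finType) (P : pred I) (F : I -> nat) x0 i :
  P i -> (\big[minn/x0]_(j | P j) F j <= F i)%N.
Proof.
move=> Pi; rewrite -big_filter; apply: bigminn_le.
by rewrite mem_filter Pi mem_index_enum.
Qed.

Lemma sqrt_prod (R : realType) (I : finType) (F : I -> R) :
  (forall i, 0 <= F i) -> Num.sqrt (\prod_i F i) = \prod_i Num.sqrt (F i).
Proof.
move=> F0; pose K := fun a b : R => Num.sqrt a = b /\ 0 <= a.
have : K (\prod_i F i) (\prod_i Num.sqrt (F i)).
  apply: (big_rec2 K); first by split; [rewrite sqrtr1 | exact: ler01].
  move=> i a b _ [<- a0]; split; [by rewrite sqrtrM // | exact: mulr_ge0].
by case.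
Qed.

Lemma sum_delta (R : realType) (T : finType) (c : T) :
  \sum_(y : T) (y == c)%:R = 1 :> R.
Proof. by rewrite (bigD1 c) //= eqxx big1 ?addr0 // => y /negbTE ->. Qed.

Lemma erasure_ge0 (R : realType) (r : nat) (eta : R) (a : 'I_r) (y : option 'I_r) : 0 <= eta <= 1 ->
  0 <= erasure eta a y.
Proof.
case/andP=> e0 e1; rewrite /erasure; apply: addr_ge0; apply: mulr_ge0 => //.
by rewrite subr_ge0.
Qed.

Lemma coord_sum (R : realType) (r : nat) (eta : R) (a b : 'I_r) : 0 <= eta <= 1 ->
  \sum_(y : option 'I_r) Num.sqrt (erasure eta a y * erasure eta b y)
  = if a == b then 1 else eta.
Proof.
case/andP=> e0 e1.
have pt : forall y : option 'I_r, Num.sqrt (erasure eta a y * erasure eta b y)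
   = eta * (y == None)%:R + (1 - eta) * (a == b)%:R * (y == Some a)%:R.
  case=> [c|]; rewrite /erasure /=.
    rewrite !mulr0 !addr0 mulrACA -expr2 sqrtrM ?sqr_ge0 // sqrtr_sqr.
    rewrite ger0_norm ?subr_ge0 // add0r -mulrA; congr (_ * _).
    rewrite !(inj_eq (@Some_inj _)).
    case ca: (c == a); case cb: (c == b);
      rewrite ?mulr0n ?mulr1n ?mulr1 ?mulr0 ?mul0r ?sqrtr0 ?sqrtr1 //.
    - by rewrite -(eqP ca) -(eqP cb) eqxx.
    - by rewrite -(eqP ca) cb.
  have -> : (1 - eta) * 0 + eta * 1 = eta by lra.
  have -> : eta * 1 + (1 - eta) * (a == b)%:R * 0 = eta by lra.
  by rewrite -expr2 sqrtr_sqr ger0_norm.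
under eq_bigr do rewrite pt.
rewrite big_split /= -!mulr_sumr !sum_delta !mulr1.
by case: eqP => _; rewrite ?mulr1 ?mulr0 ?addr0 // addrC subrK.
Qed.

Lemma fid_k (R : realType) (r k : nat) (eta : R) (x x' : {ffun 'I_k -> 'I_r}) :
  0 <= eta <= 1 ->
  fidelity (erasure_k eta x) (erasure_k eta x') = eta ^+ (2 * hamming x x').
Proof.
move=> he; rewrite /fidelity /erasure_k.
rewrite (eq_bigr (fun y : {ffun 'I_k -> option 'I_r} =>
   \prod_i Num.sqrt (erasure eta (x i) (y i) * erasure eta (x' i) (y i)))); last first.
  move=> y _; rewrite -big_split /= sqrt_prod // => i.
  by apply: mulr_ge0; apply: erasure_ge0.
rewrite -(bigA_distr_bigA (fun i y => Num.sqrt (erasure eta (x i) y * erasure eta (x' i) y))) /=.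
under eq_bigr do rewrite coord_sum //.
rewrite (bigID (fun i => x i == x' i)) /= big1; last by move=> i ->.
rewrite mul1r mulnC exprM /hamming -prodr_const; congr (_ ^+ 2).
by apply: eq_big => [i|i]; rewrite ?inE // => /negbTE ->.
Qed.

Lemma part_exists (r k s : nat) : (0 < r)%N -> (s <= k)%N ->
  exists P : {set {set {ffun 'I_k -> 'I_r}}},
    [/\ finset.partition P [set: {ffun 'I_k -> 'I_r}],
        #|P| = (r ^ (k - s))%N &
        forall B, B \in P -> forall x y, x \in B -> y \in B ->
          (hamming x y <= s)%N].
Proof.
move=> r0 sk.
pose y0 : 'I_r := Ordinal r0.
have shP (j : 'I_(k - s)) : (s + j < k)%N by rewrite -ltn_subRL.
pose sh (j : 'I_(k - s)) : 'I_k := Ordinal (shP j).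
pose f (x : {ffun 'I_k -> 'I_r}) : {ffun 'I_(k - s) -> 'I_r} := [ffun j => x (sh j)].
pose lift (g : {ffun 'I_(k - s) -> 'I_r}) : {ffun 'I_k -> 'I_r} :=
  [ffun i : 'I_k => if (s <= i)%N then odflt y0 (omap g (insub (i - s)%N)) else y0].
have flift g : f (lift g) = g.
  apply/ffunP => j; rewrite !ffunE /= leq_addr addKn.
  case: insubP => [j' _ hj'|]; last by rewrite ltn_ord.
  by congr (g _); apply: val_inj.
pose blk g := [set x | f x == g].
exists (blk @: finset.setT); split.
- rewrite /finset.partition; apply/and3P; split.
  + apply/eqP/setP => x; rewrite !finset.inE; apply/bigcupP; exists (blk (f x)).
      by apply/imsetP; exists (f x).
    by rewrite finset.inE.
  + apply/finset.trivIsetP => A B /imsetP[g _ ->] /imsetP[h _ ->] neq.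
    apply/pred0P => x /=; rewrite !finset.inE.
    apply/negP => /andP[/eqP e1 /eqP e2]; move: neq; rewrite -e1 -e2 eqxx.
    by [].
  + apply/imsetP => -[g _ /setP/(_ (lift g))]; rewrite !finset.inE flift eqxx.
    by [].
- rewrite card_imset ?cardsT ?card_ffun ?card_ord //.
  move=> g h /setP/(_ (lift g)); rewrite !finset.inE (flift g) eqxx => /esym/eqP.
  by [].
- move=> B /imsetP[g _ ->] x y; rewrite !finset.inE => /eqP ex /eqP ey.
  rewrite /hamming.
  apply: leq_trans (_ : #|[set widen_ord sk j | j : 'I_s]| <= s)%N; last first.
    by apply: leq_trans (leq_imset_card _ _) _; rewrite card_ord.
  apply: subset_leq_card; apply/fintype.subsetP => i; rewrite finset.inE => ne.
  case: (ltnP i s) => [lis|sli].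
    by apply/imsetP; exists (Ordinal lis) => //; apply: val_inj.
  have hj : (i - s < k - s)%N by rewrite ltn_sub2r // (leq_ltn_trans sli).
  have : f x (Ordinal hj) = f y (Ordinal hj) by rewrite ex ey.
  rewrite !ffunE.
  have -> : sh (Ordinal hj) = i by apply: val_inj; rewrite /= subnKC.
  by move=> e; rewrite e eqxx in ne.
Qed.

Lemma fid_bound (R : realType) (r k : nat) (eta eps : R) (s : nat) :
  0 < eta < 1 -> 0 < eps < 1 ->
  s%:Z = Num.floor (ln (1 - eps) / (2 * ln eta)) ->
  forall x x' : {ffun 'I_k -> 'I_r}, (hamming x x' <= s)%N ->
  1 - eps <= fidelity (erasure_k eta x) (erasure_k eta x').
Proof.
move=> /andP[e0 e1] /andP[p0 p1] hs x x' hxx'.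
have he : 0 <= eta <= 1 by rewrite (ltW e0) (ltW e1).
rewrite fid_k //.
have h2 : (2 * hamming x x' <= 2 * s)%N by rewrite leq_mul2l hxx' orbT.
apply: le_trans (ler_wiXn2l (ltW e0) (ltW e1) h2).
have L0 : ln eta < 0 by apply: ln_lt0; rewrite e0 e1.
have q0 : 1 - eps > 0 by lra.
rewrite -ler_ln ?posrE ?exprn_gt0 // lnXn //.
set q := ln (1 - eps) / (2 * ln eta).
have fl : s%:R <= q by have := floor_le q; rewrite -hs.
have eq : ln (1 - eps) = q * (2 * ln eta).
  by rewrite /q divfK // mulf_neq0 // lt_eqF.
rewrite -[ln eta *+ _]mulr_natl natrM eq.
nra.
Qed.

Theorem mainTheorem5 (R : realType) (r : nat) (eta eps : R) (s : nat) :
  (2 <= r)%N -> 0 < eta < 1 -> 0 < eps < 1 ->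
  s%:Z = Num.floor (ln (1 - eps) / (2 * ln eta)) ->
  (* (i) *)
  (forall k : nat, (s <= k)%N ->
     exists P : {set {set {ffun 'I_k -> 'I_r}}},
       [/\ finset.partition P [set: {ffun 'I_k -> 'I_r}],
           #|P| = (r ^ (k - s))%N &
           forall B, B \in P -> forall x y, x \in B -> y \in B ->
             (hamming x y <= s)%N]) /\
  (* (ii) *)
  (forall k : nat, (s <= k)%N ->
     (rev_compression_size (@erasure_k R r k eta) eps <= r ^ (k - s))%N) /\
  (* (iii) *)
  ((1 - (r%:R ^- s) : R)%:E <=
     limn_einf (fun k : nat => (compressibility (@erasure_k R r k eta) eps)%:E))%E.
Proof.
move=> hr he hp hs.
have r0 : (0 < r)%N by apply: leq_trans hr.
have partI := fun k (sk : (s <= k)%N) => @part_exists r k s r0 sk.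
have partII : forall k : nat, (s <= k)%N ->
     (rev_compression_size (@erasure_k R r k eta) eps <= r ^ (k - s))%N.
  move=> k sk; have [P [pP cP hP]] := partI k sk.
  rewrite -cP /rev_compression_size; apply: bigminn_le_cond.
  rewrite /admissible_partition pP /=.
  apply/forall_inP => B BP; apply/forall_inP => x xB; apply/forall_inP => x' x'B.
  exact: (@fid_bound R r k eta eps s he hp hs x x' (hP B BP x x' xB x'B)).
split => //; split => //.
rewrite limn_einf_lim; apply: lime_ge; first exact: is_cvg_einfs.
exists (maxn s 1) => // m /= hm.
apply: le_ereal_inf_tmp => _ [n /= mn <-].
rewrite lee_fin.
have sn : (s <= n)%N by apply: leq_trans mn; apply: leq_trans hm; exact: leq_maxl.
have n1 : (1 <= n)%N by apply: leq_trans mn; apply: leq_trans hm; exact: leq_maxr.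
have hN := partII n sn.
rewrite /compressibility card_ffun !card_ord.
set N := rev_compression_size _ _ in hN *.
have hrn : (r ^ n = r ^ s * r ^ (n - s))%N by rewrite -expnD subnKC.
rewrite hrn !natrM !natrX.
set a := r%:R ^+ s.
set M := r%:R ^+ (n - s).
have hNM : (N%:R <= M :> R) by rewrite /M -natrX ler_nat.
have a1 : 1 <= a by rewrite /a exprn_ege1 // ler1n; apply: leq_trans hr.
have M1 : 1 <= M by rewrite /M exprn_ege1 // ler1n; apply: leq_trans hr.
have am : 2 <= a * M.
  rewrite /a /M -exprD subnKC // -natrX (ler_nat R 2).
  have h1 : (r ^ 1 <= r ^ n)%N by rewrite (leq_exp2l _ _ hr).
  by rewrite expn1 in h1; apply: leq_trans hr h1.
have b0 : 0 < a^-1 by rewrite invr_gt0; lra.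
have b1 : a^-1 <= 1 by rewrite invf_le1 //; lra.
have ab : a * a^-1 = 1 by rewrite divff //; lra.
rewrite ler_pdivlMr; last by lra.
have -> : (1 - a^-1) * (a * M - 1) = a * M - 1 - M + a^-1.
  have a0 : a != 0 by rewrite gt_eqF //; lra.
  rewrite mulrBl mul1r mulrBr mulr1 mulrA mulVf // mul1r.
  ring.
lra.
Qed.
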